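(* Let $A\in M_{n}(\mathbb{R})$ be a non-singular $n\times n$ matrix that is properly arranged. Then $A$ is diagonally eliminable.
   Context: Gauss-Jordan procedure: for $A\in M_{m,n}(\mathbb{R})$ set $A^{(0)}=A$. For $k\geq 0$, if $A^{(2k)}=[a^{(2k)}_{ij}]$ is defined and $a^{(2k)}_{k+1,k+1}\neq 0$, let $\mathcal{G}_{2k+1}$ be the $m\times m$ diagonal matrix with all diagonal entries $1$ except the $(k+1,k+1)$ entry, which is $1/a^{(2k)}_{k+1,k+1}$, and set $A^{(2k+1)}=\mathcal{G}_{2k+1}A^{(2k)}=[a^{(2k+1)}_{ij}]$; then let $\mathcal{G}_{2k+2}=[g_{ij}]_{m\times m}$ with $g_{ii}=1$, $g_{i,k+1}=-a^{(2k+1)}_{i,k+1}$ for $i\neq k+1$, and all other entries $0$, and set $A^{(2k+2)}=\mathcal{G}_{2k+2}A^{(2k+1)}$. A matrix $A\in M_{m,n}(\mathbb{R})$ of rank $r\geq 1$ is diagonally eliminable up to $r$ if for each $k=1,\dots,r$ the matrix $A^{(2k-2)}$ is defined and $a^{(2k-2)}_{kk}\neq 0$; it is diagonally eliminable if moreover $r=m\leq n$. Minors: $m^{i_1\dots i_p}_{j_1\dots j_p}$ (increasing indices) is the determinant of the submatrix of $A$ with rows $i_1,\dots,i_p$ and columns $j_1,\dots,j_p$; $m_k=m^{1\dots k}_{1\dots k}$. $A$ (of rank $\geq 1$) is properly arranged if $|a_{ij}|\leq|a_{11}|$ for all $i,j$, and for every integer $k$ with $1\leq k<\min\{m,n\}$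 one has $|m^{1\dots k\,i}_{1\dots k\,j}|\leq|m_{k+1}|$ for all $k+1\leq i\leq m$, $k+1\leq j\leq n$. *)

(* Defs.v *)
From HB Require Import structures.
From mathcomp Require Import all_boot all_order all_algebra.
Set Implicit Arguments. Unset Strict Implicit. Unset Printing Implicit Defensive.
Import Order.TTheory GRing.Theory Num.Theory.
Local Open Scope ring_scope.

Section GaussJordan.
Variables (R : realFieldType) (m n : nat).

(* Entry of B at 0-based nat indices (i, j); 0 when out of range.
   The paper's a_{i+1, j+1} is  mx_ent B i j. *)
Definition mx_ent (B : 'M[R]_(m, n)) (i j : nat) : R :=
  match (insub i : option 'I_m), (insub j : option 'I_n) with
  | Some i', Some j' => B i' j'
  | _, _ => 0
  end.

(* G_{2k+1}: diagonal, all ones except entry (k+1,k+1) = 1/p (0-based k). *)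
Definition gj_G1 (p : R) (k : nat) : 'M[R]_m :=
  \matrix_(i < m, j < m)
     if i == j then (if (i : nat) == k then p^-1 else 1) else 0.

(* G_{2k+2}: g_ii = 1, g_{i,k+1} = - a^{(2k+1)}_{i,k+1} for i <> k+1, else 0. *)
Definition gj_G2 (B : 'M[R]_(m, n)) (k : nat) : 'M[R]_m :=
  \matrix_(i < m, j < m)
     if i == j then 1 else if (j : nat) == k then - mx_ent B i k else 0.

Fixpoint gj (A : 'M[R]_(m, n)) (t : nat) : option 'M[R]_(m, n) :=
  match t with
  | 0 => Some A
  | t'.+1 =>
    match gj A t' with
    | None => None
    | Some B =>
      let k := t'./2 in
      if odd t' then Some (gj_G2 B k *m B)            (* t = 2k+2 *)
      else if mx_ent B k k != 0                       (* t = 2k+1 *)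
           then Some (gj_G1 (mx_ent B k k) k *m B)
           else None
    end
  end.

Definition diag_elim_upto (A : 'M[R]_(m, n)) (r : nat) : Prop :=
  forall k : nat, (1 <= k <= r)%N ->
    exists B, gj A (2 * k - 2) = Some B /\ mx_ent B k.-1 k.-1 != 0.

Definition diag_eliminable (A : 'M[R]_(m, n)) : Prop :=
  (0 < \rank A)%N /\ diag_elim_upto A (\rank A) /\ \rank A = m /\ (m <= n)%N.

Definition lead_minor (A : 'M[R]_(m, n)) (p : nat) : R :=
  \det (\matrix_(s < p, t < p) mx_ent A s t).

(* m^{1..k i}_{1..k j} for 1-based i,j >= k+1; here i, j are 0-based (>= k). *)
Definition ext_minor (A : 'M[R]_(m, n)) (k i j : nat) : R :=
  \det (\matrix_(s < k.+1, t < k.+1)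
          mx_ent A (if (s < k)%N then (s : nat) else i) (if (t < k)%N then (t : nat) else j)).

Definition properly_arranged (A : 'M[R]_(m, n)) : Prop :=
  (0 < \rank A)%N /\
  (forall (i : 'I_m) (j : 'I_n), `|A i j| <= `|mx_ent A 0 0|) /\
  (forall k : nat, (1 <= k)%N -> (k < minn m n)%N ->
     forall i j : nat, (k <= i < m)%N -> (k <= j < n)%N ->
       `|ext_minor A k i j| <= `|lead_minor A k.+1|).

End GaussJordan.

(* Main.v *)
Require Import Defs.
From HB Require Import structures.
From mathcomp Require Import all_boot all_order all_algebra.
Import Order.TTheory GRing.Theory Num.Theory.
Local Open Scope ring_scope.
Set Implicit Arguments. Unset Strict Implicit.

Section H.
Variable R : realFieldType.

Lemma mx_entE m n (B : 'M[R]_(m, n)) (i : 'I_m) (j : 'I_n) : mx_ent B i j = B i j.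
Proof. by rewrite /mx_ent !valK. Qed.

Lemma mx_ent_out m n (B : 'M[R]_(m, n)) i j : (m <= i)%N -> mx_ent B i j = 0.
Proof. by move=> h; rewrite /mx_ent insubF // ltnNge h. Qed.

Lemma mx_ent_outc m n (B : 'M[R]_(m, n)) i j : (n <= j)%N -> mx_ent B i j = 0.
Proof. by move=> h; rewrite /mx_ent; case: insub => // ?; rewrite insubF // ltnNge h. Qed.

Lemma sum_split (F : nat -> R) k n : (k < n)%N ->
  (forall i, (k < i)%N -> (i < n)%N -> F i = 0) ->
  \sum_(i < n) F i = \sum_(i < k) F i + F k.
Proof.
move=> kn h; rewrite -(big_mkord xpredT F) (@big_cat_nat _ _ _ k.+1) //=.
rewrite big_nat_recr //= [\sum_(k.+1 <= i < n) _]big_nat_cond [\sum_(k.+1 <= i < n | _) _]big1 ?addr0 ?big_mkord //.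
by move=> i /andP[/andP[ki ni] _]; apply: h.
Qed.

Lemma G1E m q (p : R) k (C : 'M[R]_(m, q)) i j :
  (gj_G1 m p k *m C) i j = (if (i : nat) == k then p^-1 else 1) * C i j.
Proof.
rewrite mxE (bigD1 i) //= mxE eqxx big1 ?addr0 // => l /negPf hl.
by rewrite mxE eq_sym hl mul0r.
Qed.

Lemma G2E m n q (D : 'M[R]_(m, n)) (kk : 'I_m) (C : 'M[R]_(m, q)) i j :
  (gj_G2 D kk *m C) i j = if i == kk then C i j else C i j - mx_ent D i kk * C kk j.
Proof.
rewrite mxE; case: eqP => [->|ne].
  rewrite (bigD1 kk) //= mxE eqxx mul1r big1 ?addr0 // => l /negPf hl.
  rewrite mxE eq_sym hl; case: ifP; rewrite ?mul0r // => /eqP/val_inj e.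
  by rewrite e eqxx in hl.
rewrite (bigD1 i) //= (bigD1 kk) /=; last by apply/eqP=> e; apply: ne.
rewrite !mxE eqxx mul1r.
have -> : (i == kk) = false by apply/eqP.
rewrite eqxx big1 ?addr0 ?mulNr // => l /andP[/negPf h1 /negPf h2].
rewrite mxE eq_sym h1; case: ifP; rewrite ?mul0r // => /eqP/val_inj e.
by rewrite e eqxx in h2.
Qed.

End H.
Section GJ.
Variables (R : realFieldType) (n : nat) (A : 'M[R]_n).

Lemma gj_step k B : gj A (k.*2) = Some B -> mx_ent B k k != 0 ->
  gj A (k.+1).*2 = Some (gj_G2 (gj_G1 n (mx_ent B k k) k *m B) k *m (gj_G1 n (mx_ent B k k) k *m B)).
Proof.
move=> h hp; rewrite doubleS /= h odd_double half_double hp /=.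
by rewrite uphalf_double.
Qed.

Definition Inv k (B : 'M[R]_n) :=
  (forall (i j : 'I_n), (j < k)%N -> B i j = (i == j)%:R) /\
  (forall x : 'cV[R]_n, (forall j : 'I_n, (j < k)%N -> (B *m x) j 0 = 0) ->
     forall i : 'I_n, (A *m x) i 0 = if (i < k)%N then 0 else (B *m x) i 0).

Lemma Inv0 : Inv 0 A.
Proof. by split. Qed.

Lemma Inv_step k (hk : (k < n)%N) B : Inv k B -> mx_ent B k k != 0 ->
  Inv k.+1 (gj_G2 (gj_G1 n (mx_ent B k k) k *m B) k *m (gj_G1 n (mx_ent B k k) k *m B)).
Proof.
pose kk := Ordinal hk.
have -> : k = kk by [].
rewrite mx_entE => -[hc hx] hp.
set p := B kk kk.
set B1 := gj_G1 n p kk *m B.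
have B1E i j : B1 i j = (if i == kk then p^-1 else 1) * B i j by rewrite G1E.
have B1kk : B1 kk kk = 1 by rewrite B1E eqxx mulVf.
split.
  move=> i j; rewrite ltnS leq_eqVlt => /orP[/eqP/val_inj->|jk].
    rewrite G2E mx_entE; case: eqP => [->|ne]; first by rewrite B1kk.
    by rewrite B1kk mulr1 subrr.
  have Bkj : B kk j = 0.
    by rewrite hc //; case: eqP => [e|//]; rewrite -e ltnn in jk.
  have B1kj : B1 kk j = 0 by rewrite B1E Bkj mulr0.
  rewrite G2E B1kj mulr0 subr0 if_same B1E hc //.
  case: (eqVneq i j) => [eij|nij]; last by rewrite mulr0.
  rewrite eij; case: eqP => [e|_]; last by rewrite mulr1.
  by rewrite e ltnn in jk.
move=> x hx2 i.
set y := B *m x.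
have e2 : forall i, (gj_G2 B1 kk *m B1 *m x) i 0 =
   if i == kk then (gj_G1 n p kk *m y) i 0 else (gj_G1 n p kk *m y) i 0 - mx_ent B1 i kk * (gj_G1 n p kk *m y) kk 0.
  by move=> i'; rewrite -mulmxA -/B1 G2E /B1 -mulmxA.
have ykk : y kk 0 = 0.
  have := hx2 kk (ltnSn _); rewrite e2 eqxx G1E eqxx.
  by move/eqP; rewrite mulf_eq0 invr_eq0 (negPf hp) /= => /eqP.
have yE i' : i' != kk -> (gj_G2 B1 kk *m B1 *m x) i' 0 = y i' 0.
  move=> /negPf ne; have ne' : ((i' : nat) == (kk : nat)) = false := ne.
  by rewrite e2 ne !G1E ne' eqxx ykk !mulr0 subr0 mul1r.
have hy : forall j : 'I_n, (j < kk)%N -> y j 0 = 0.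
  move=> j jk; have jne : j != kk by apply/eqP=> e; rewrite e ltnn in jk.
  by rewrite -(yE _ jne) hx2 // ltnW.
rewrite (hx x hy i).
case: (ltngtP i kk) => [ik|ki|/val_inj ->].
- by rewrite ltnS (ltnW ik).
- rewrite ltnS leqNgt ki /= yE //.
  by apply/eqP=> e; rewrite e ltnn in ki.
- by rewrite ltnSn.
Qed.

End GJ.
Section Piv.
Variables (R : realFieldType) (n : nat) (A : 'M[R]_n).

Lemma mx_ent_ord m q (B : 'M[R]_(m, q)) i j (hi : (i < m)%N) (hj : (j < q)%N) :
  mx_ent B i j = B (Ordinal hi) (Ordinal hj).
Proof. exact: (mx_entE B (Ordinal hi) (Ordinal hj)). Qed.

Lemma mulmx_nat m q (B : 'M[R]_(m, n)) (C : 'M[R]_(n, q)) (i : 'I_m) (j : 'I_q) :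
  (B *m C) i j = \sum_(l < n) (fun l : nat => mx_ent B i l * mx_ent C l j) l.
Proof. by rewrite mxE; apply: eq_bigr => l _; rewrite !mx_entE. Qed.

Lemma mulmx_split m q k (hk : (k < n)%N) (B : 'M[R]_(m, n)) (C : 'M[R]_(n, q)) (i : 'I_m) (j : 'I_q) :
  (forall l, (k < l)%N -> mx_ent C l j = 0) ->
  (B *m C) i j = \sum_(l < k) mx_ent B i l * mx_ent C l j + mx_ent B i k * mx_ent C k j.
Proof.
move=> h; rewrite mulmx_nat (sum_split (F := fun l : nat => mx_ent B i l * mx_ent C l j) hk) //.
by move=> l kl _ /=; rewrite h // mulr0.
Qed.

Lemma pivot_nz k (hk : (k < n)%N) B : Inv A k B -> mx_ent B k k = 0 ->
  lead_minor A k.+1 = 0.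
Proof.
move=> [hc hx] hp.
pose kk := Ordinal hk.
pose x : 'cV[R]_n := \col_i (if (i < k)%N then - B i kk else if (i : nat) == k then 1 else 0).
have xout : forall i, (k < i)%N -> mx_ent x i 0 = 0.
  move=> i ki; case: (ltnP i n) => hi; last by rewrite mx_ent_out.
  rewrite (mx_ent_ord _ hi (ltn0Sn 0)) mxE ltnNge (ltnW ki) /=.
  by case: eqP => // e; rewrite e ltnn in ki.
have xk : mx_ent x k 0 = 1.
  by rewrite (mx_ent_ord _ hk (ltn0Sn 0)) mxE ltnn eqxx.
have hBx : forall j : 'I_n, (j <= k)%N -> (B *m x) j 0 = 0.
  move=> j jk; rewrite (mulmx_split hk) //.
  rewrite xk mulr1.
  have hc' : forall l, (l < k)%N -> mx_ent B j l = ((j : nat) == l)%:R.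
    by move=> l lk; rewrite (mx_ent_ord B (ltn_ord j) (ltn_trans lk hk)) hc.
  have xl : forall l, (l < k)%N -> mx_ent x l 0 = - mx_ent B l k.
    move=> l lk; rewrite (mx_ent_ord x (ltn_trans lk hk) (ltn0Sn 0)) mxE /= lk.
    by rewrite (mx_ent_ord B (ltn_trans lk hk) hk).
  under eq_bigr => i _ do rewrite hc' // xl //.
  case: (ltnP j k) => jk'.
    rewrite (bigD1 (Ordinal jk')) //= eqxx mul1r big1 ?addr0 ?addNr //.
    move=> i /eqP ne; case: eqP => [e|]; last by rewrite mul0r.
    by case: ne; apply: val_inj; rewrite /= -e.
  have ejk : (j : nat) = k by apply/eqP; rewrite eqn_leq jk jk'.
  rewrite big1 ?add0r ?ejk //.
  move=> i _; case: eqP => [e|]; last by rewrite mul0r.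
  by have := ltn_ord i; rewrite -e ltnn.
have hAx : forall s : 'I_n, (s <= k)%N -> (A *m x) s 0 = 0.
  move=> s sk; rewrite (hx x) => [|j jk]; last by rewrite hBx // ltnW.
  by case: ifP => // _; apply: hBx.
apply/eqP; rewrite /lead_minor -det_tr; apply/det0P.
exists (\row_t mx_ent x t 0).
  apply/eqP => /matrixP /(_ 0 ord_max); rewrite !mxE /= xk => /eqP.
  by rewrite oner_eq0.
apply/matrixP => i j; rewrite [RHS]mxE mxE.
have sn : (j < n)%N by apply: leq_trans (ltn_ord j) hk.
transitivity ((A *m x) (Ordinal sn) 0); last by apply: hAx; rewrite /= -ltnS.
rewrite (mulmx_split hk) // big_ord_recr /=; congr (_ + _).
  by apply: eq_bigr => t _; rewrite !mxE mulrC.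
by rewrite !mxE mulrC.
Qed.

End Piv.
Section Sing.
Variables (R : realFieldType) (n : nat) (A : 'M[R]_n).

Lemma mulmx_splitl m q k (hk : (k < n)%N) (B : 'M[R]_(m, n)) (C : 'M[R]_(n, q)) (i : 'I_m) (j : 'I_q) :
  (forall l, (k < l)%N -> mx_ent B i l = 0) ->
  (B *m C) i j = \sum_(l < k) mx_ent B i l * mx_ent C l j + mx_ent B i k * mx_ent C k j.
Proof.
move=> h; rewrite mulmx_nat (sum_split (F := fun l : nat => mx_ent B i l * mx_ent C l j) hk) //.
by move=> l kl _ /=; rewrite h // mul0r.
Qed.

Lemma sing k (hk : (k < n)%N) : lead_minor A k != 0 ->
  (forall j, (k <= j)%N -> (j < n)%N -> ext_minor A k k j = 0) -> \det A = 0.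
Proof.
move=> hL hE.
set L := \matrix_(s < k, t < k) mx_ent A s t.
have Lu : L \in unitmx by rewrite unitmxE unitfE.
set r : 'rV[R]_k := \row_t mx_ent A k t.
set w := r *m invmx L.
have key : forall j, (j < n)%N -> mx_ent A k j = \sum_(s < k) w 0 s * mx_ent A s j.
  move=> j jn; case: (ltnP j k) => jk.
    have := congr1 (fun M : 'rV[R]_k => M 0 (Ordinal jk)) (mulmxKV Lu r).
    rewrite /= !mxE => <-; apply: eq_bigr => s _; rewrite !mxE //.
  have := hE j jk jn; rewrite /ext_minor => /eqP/det0P[v vn0 vM].
  set M := \matrix_(s < k.+1, t < k.+1) _ in vM.
  set tt := fun t : 'I_k.+1 => if (t < k)%N then (t : nat) else j.
  have hv : forall t : 'I_k.+1,
      \sum_(s < k) v 0 (widen_ord (leqnSn k) s) * mx_ent A s (tt t) + v 0 ord_max * mx_ent A k (tt t) = 0.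
    move=> t; transitivity ((v *m M) 0 t); last by rewrite vM mxE.
    rewrite mxE big_ord_recr /=.
    congr (_ + _); last by rewrite !mxE ltnn.
    by apply: eq_bigr => s _; rewrite !mxE /= (ltn_ord s).
  set c := v 0 ord_max.
  have c0 : c != 0.
    apply/eqP => c0.
    set v' : 'rV[R]_k := \row_s v 0 (widen_ord (leqnSn k) s).
    have v'L : v' *m L = 0.
      apply/matrixP => i t; rewrite !ord1 !mxE.
      transitivity (\sum_(s < k) v 0 (widen_ord (leqnSn k) s) * mx_ent A s (tt (widen_ord (leqnSn k) t)) + c * mx_ent A k (tt (widen_ord (leqnSn k) t))).
        by rewrite c0 mul0r addr0; apply: eq_bigr => s _; rewrite !mxE /tt /= (ltn_ord t).
      exact: hv.
    have v'0 : v' = 0 by rewrite -(mulmxK Lu v') v'L mul0mx.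
    apply/negP: vn0; rewrite negbK; apply/eqP/matrixP => i s; rewrite !ord1 mxE.
    case: (ltnP s k) => sk.
      have := congr1 (fun M : 'rV[R]_k => M 0 (Ordinal sk)) v'0; rewrite !mxE.
      by have -> : widen_ord (leqnSn k) (Ordinal sk) = s by apply: val_inj.
    have -> : s = ord_max by apply: val_inj => /=; apply/eqP; rewrite eqn_leq sk -ltnS ltn_ord.
    by [].
  set w' : 'rV[R]_k := \row_s (- v 0 (widen_ord (leqnSn k) s) / c).
  have hw' : forall t : 'I_k.+1, \sum_(s < k) w' 0 s * mx_ent A s (tt t) = mx_ent A k (tt t).
    move=> t; have := hv t; move/eqP; rewrite addr_eq0 => /eqP hs.
    transitivity ((\sum_(s < k) v 0 (widen_ord (leqnSn k) s) * mx_ent A s (tt t)) * (- c^-1)).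
      rewrite mulr_suml; apply: eq_bigr => s _; rewrite !mxE.
      by rewrite mulNr mulrN mulNr mulrAC.
    by rewrite hs mulrNN mulrAC mulfV // mul1r.
  have w'L : w' *m L = r.
    apply/matrixP => i t; rewrite !ord1 !mxE.
    have := hw' (widen_ord (leqnSn k) t); rewrite /tt /= (ltn_ord t) => <-.
    by apply: eq_bigr => s _; rewrite !mxE.
  have ww' : w = w' by rewrite /w -w'L mulmxK.
  have := hw' ord_max; rewrite /tt /= ltnn => <-.
  by rewrite ww'.
apply/eqP/det0P.
pose kk := Ordinal hk.
exists (\row_i (if (i < k)%N then mx_ent w 0 i else if (i : nat) == k then -1 else 0)).
  apply/eqP => /matrixP /(_ 0 kk); rewrite !mxE /= ltnn eqxx => /eqP.
  by rewrite oppr_eq0 oner_eq0.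
apply/matrixP => i j; rewrite [RHS]mxE (mulmx_splitl hk); last first.
  move=> l kl; rewrite ord1 /=; case: (ltnP l n) => ln; last by rewrite mx_ent_outc.
  rewrite (mx_ent_ord _ (ltn0Sn 0) ln) mxE /= ltnNge (ltnW kl) /=.
  by case: eqP => // e; rewrite e ltnn in kl.
rewrite ord1 /= (mx_ent_ord _ (ltn0Sn 0) hk) mxE /= ltnn eqxx mulN1r.
rewrite key //; apply/eqP; rewrite subr_eq0; apply/eqP; apply: eq_bigr => s _.
rewrite (mx_ent_ord _ (ltn0Sn 0) (ltn_trans (ltn_ord s) hk)) mxE /= (ltn_ord s).
by rewrite (mx_ent_ord _ (ltn0Sn 0) (ltn_ord s)); congr (w _ _ * _); apply: val_inj.
Qed.

End Sing.
Lemma all_minors (R : realFieldType) n (A : 'M[R]_n) : A \in unitmx -> properly_arranged A ->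
  forall k, (1 <= k <= n)%N -> lead_minor A k != 0.
Proof.
move=> hu [r0 [h00 hpa]].
elim=> // k IH /andP[_ kn].
case: k IH kn => [_ n1|k IH kn].
  rewrite /lead_minor det_mx11 mxE /=.
  apply/eqP => a0; move: r0.
  have -> : A = 0.
    apply/matrixP => i j; rewrite mxE; apply/eqP; rewrite -normr_le0.
    by rewrite -(normr0 R) -a0 h00.
  by rewrite mxrank0.
have hk : (k.+1 < n)%N by [].
apply/eqP => h0.
have hL : lead_minor A k.+1 != 0 by apply: IH; rewrite /= ltnW.
move: hu; rewrite unitmxE unitfE (sing hk hL) ?eqxx //.
move=> j kj jn; apply/eqP; rewrite -normr_le0 -(normr0 R) -h0.
by apply: hpa => //; rewrite ?minnn ?leqnn ?kj.
Qed.

Unset Implicit Arguments.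

Theorem corollary2p12 (R : realFieldType) (n : nat) (A : 'M[R]_n) :
  A \in unitmx -> properly_arranged A -> diag_eliminable A.
Proof.
move=> hu hpa.
have rk := mxrank_unit hu.
split; first by case: hpa.
split; last by rewrite rk.
rewrite rk => k /andP[k1 kn].
have inv : forall k, (k <= n)%N -> exists B, gj A k.*2 = Some B /\ Inv A k B.
  elim=> [_|k' IH kn']; first by exists A; split => //; exact: Inv0.
  case: (IH (ltnW kn')) => B [hB hI].
  have hp : mx_ent B k' k' != 0.
    apply/eqP => /(pivot_nz kn' hI) /eqP.
    by apply/negP; apply: (all_minors hu hpa); rewrite ltnS leq0n kn'.
  by eexists; split; [exact: gj_step hB hp | exact: Inv_step].
case: k k1 kn => // k _ kn.
have e : (2 * k.+1 - 2 = k.*2)%N by rewrite mulnS addKn mul2n.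
rewrite e /=.
case: (inv k (ltnW kn)) => B [hB hI]; exists B; split => //.
apply/eqP => /(pivot_nz kn hI) /eqP.
by apply/negP; apply: (all_minors hu hpa); rewrite ltnS leq0n kn.
Qed.
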